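(* Let $t\ge1$ and $n=t+1$. The gadget $\mathtt{SecBackSub}$ defined below is $t$-NIo secure with public output $\mathbf{x}$. $\mathtt{SecBackSub}$ takes as input a Boolean sharing $(\mathbf{A}_i)$ of a matrix $\mathbf{A}\in\mathbb{F}_q^{m\times m}$ and a Boolean sharing $(\mathbf{b}_i)$ of $\mathbf{b}\in\mathbb{F}_q^m$ and computes: for $j=m$ down to $2$: $\mathbf{x}[j]:=\mathtt{FullAdd}((\mathbf{b}[j]_i))$; for $k=1,\dots,j-1$: $\mathbf{b}[k]_i:=\mathbf{b}[k]_i+\mathbf{x}[j]\cdot\mathbf{A}[k,j]_i$ for every $i$. Then $\mathbf{x}[1]:=\mathtt{FullAdd}((\mathbf{b}[1]_i))$, and it returns the public vector $\mathbf{x}\in\mathbb{F}_q^m$.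
   Context: A Boolean sharing of $x\in\mathbb{F}_q$ is $(x_1,\dots,x_n)$ with $x=x_1+\cdots+x_n$; vectors and matrices are shared entry-wise; $\mathbf{v}[j]$ and $\mathbf{A}[k,j]$ denote entries. $\mathtt{StrongRefresh}((x_i))$: set $y_i:=x_i$; for $1\le i<j\le n$: sample $r$ uniformly from $\mathbb{F}_q$, set $y_i:=y_i+r$, $y_j:=y_j-r$; return $(y_i)$ (this gadget is free-$t$-SNI). $\mathtt{FullAdd}((y_i))$: $(a_i):=\mathtt{StrongRefresh}((y_i))$ and return $a_1+\cdots+a_n$. Probing model: an adversary may place probes on intermediate values (internal wires) of a gadget. A gadget with public output $b$ and some input sharings is $t$-NIo (non-interference with public outputs) secure if any set of at most $t_1\le t$ probes on its internal wires can be perfectly simulated using $t_1$ shares of each of its input sharings together with the value $b$. *)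

(* Defs.v *)
From HB Require Import structures.
From mathcomp Require Import all_boot all_order all_algebra.
Set Implicit Arguments. Unset Strict Implicit. Unset Printing Implicit Defensive.
Import Order.TTheory GRing.Theory Num.Theory.
Local Open Scope ring_scope.

Definition prob (R : finType) (E : pred R) : rat :=
  (#|[set r | E r]|%:R / #|R|%:R)%R.

Definition probe (F : finFieldType) (P : seq nat) (tr : seq F) : seq F :=
  [seq nth 0 tr p | p <- P].

(* t-NIo security (non-interference with public outputs) of a gadget with
   two input sharings (each with n shares, shares of types T1 and T2),
   internal randomness uniform on the finite type Rnd, list of internal
   wires [trace A b r] and public output [out A b r].

   For every set P of probes (distinct wire indices) with t1 := size P <= t,
   there are share index sets I1, I2 of size <= t1 and a (randomized, with
   uniform randomness on a finite type Rs) simulator S which only reads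
   the shares of the inputs indexed by I1, resp. I2, together with the
   public output, such that the joint distribution of (probed values,
   public output) equals the one obtained by sampling the public output
   from the real execution and the probed values from the simulator. *)
Definition t_NIo (F : finFieldType) (n : nat) (T1 T2 : Type) (Out : eqType)
  (Rnd : finType) (t : nat)
  (trace : ('I_n -> T1) -> ('I_n -> T2) -> Rnd -> seq F)
  (out : ('I_n -> T1) -> ('I_n -> T2) -> Rnd -> Out) : Prop :=
  forall P : seq nat,
    uniq P -> (size P <= t)%N ->
    (forall p, p \in P -> forall A b r, (p < size (trace A b r))%N) ->
    exists I1 I2 : {set 'I_n},
      [/\ (#|I1| <= size P)%N, (#|I2| <= size P)%N &
      exists (Rs : finType) (S : ('I_n -> T1) -> ('I_n -> T2) -> Out -> Rs -> seq F),
        (forall A A' b b' o s, (forall i, i \in I1 -> A i = A' i) ->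
            (forall i, i \in I2 -> b i = b' i) -> S A b o s = S A' b' o s) /\
        (forall A b (o : Out) (v : seq F),
            prob (fun r => (probe P (trace A b r) == v) && (out A b r == o))
            = prob (fun r => out A b r == o) * prob (fun s => S A b o s == v))].

Section Gadgets.
Variables (F : finFieldType) (n m : nat).

Definition upd (y : 'I_n -> F) (k : 'I_n) (v : F) : 'I_n -> F :=
  fun i => if i == k then v else y i.

Definition refresh_pairs : seq ('I_n * 'I_n) :=
  [seq (i, j) | i : 'I_n <- enum 'I_n, j : 'I_n <- [seq j : 'I_n <- enum 'I_n | (i < j)%N]].

Definition refresh_step (rnd : 'I_n * 'I_n -> F)
    (st : ('I_n -> F) * seq F) (ij : 'I_n * 'I_n) : ('I_n -> F) * seq F :=
  let: (y, tr) := st in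
  let r := rnd ij in
  let y1 := upd y ij.1 (y ij.1 + r) in
  let y2 := upd y1 ij.2 (y1 ij.2 - r) in
  (y2, tr ++ [:: r; y2 ij.1; y2 ij.2]).

Definition strong_refresh (rnd : 'I_n * 'I_n -> F) (y : 'I_n -> F)
    : ('I_n -> F) * seq F :=
  foldl (refresh_step rnd) (y, [seq y i | i <- enum 'I_n]) refresh_pairs.

Definition full_add (rnd : 'I_n * 'I_n -> F) (y : 'I_n -> F) : F * seq F :=
  let: (a, tr) := strong_refresh rnd y in
  (\sum_(i < n) a i,
   tr ++ [seq \sum_(i < n | (i <= k)%N) a i | k : 'I_n <- enum 'I_n]).

(* Randomness of SecBackSub: one StrongRefresh randomness per FullAdd call
   (the call computing x[j] uses rnd j; entries (i,j) with i >= j unused). *)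
Definition sbs_rnd := {ffun 'I_m -> {ffun 'I_n * 'I_n -> F}}.

(* state: current shares b[k]_i, computed x, wires so far *)
Definition sbs_state := (('I_m -> 'I_n -> F) * ('I_m -> F) * seq F)%type.

Definition sbs_upd (A : 'I_n -> 'M[F]_m) (j : 'I_m)
    (st : sbs_state) (ki : 'I_m * 'I_n) : sbs_state :=
  let: (bs, x, tr) := st in
  let: (k, i) := ki in
  let p := x j * A i k j in
  let v := bs k i + p in
  ((fun k' i' => if (k' == k) && (i' == i) then v else bs k' i'), x,
   tr ++ [:: p; v]).

(* iteration j (0-based, from m-1 down to 0):
   x[j] := FullAdd(b[j]); for k < j, for every i: update b[k]_i *)
Definition sbs_iter (A : 'I_n -> 'M[F]_m) (rnd : sbs_rnd)
    (st : sbs_state) (j : 'I_m) : sbs_state :=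
  let: (bs, x, tr) := st in
  let: (xj, trf) := full_add (rnd j) (bs j) in
  let x' := fun j' => if j' == j then xj else x j' in
  foldl (sbs_upd A j) (bs, x', tr ++ trf)
    [seq (k, i) | k <- [seq k : 'I_m <- enum 'I_m | (k < j)%N], i <- enum 'I_n].

Definition sbs_run (A : 'I_n -> 'M[F]_m) (b : 'I_n -> 'cV[F]_m)
    (rnd : sbs_rnd) : sbs_state :=
  let tr0 := flatten [seq [seq A i k j | k <- enum 'I_m, j <- enum 'I_m] | i <- enum 'I_n]
          ++ [seq b i k 0 | i <- enum 'I_n, k <- enum 'I_m] in
  foldl (sbs_iter A rnd) ((fun k i => b i k 0), (fun _ => 0), tr0)
        (rev (enum 'I_m)).

Definition sbs_trace A b rnd : seq F := (sbs_run A b rnd).2.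

Definition sbs_out A b rnd : 'cV[F]_m :=
  let: (_, x, _) := sbs_run A b rnd in \col_(j < m) x j.

End Gadgets.

(* Main.v *)
Require Import Defs.
From HB Require Import structures.
From mathcomp Require Import all_boot all_order all_algebra.
From mathcomp Require Import ring zify.
From Stdlib Require Import FunctionalExtensionality.
Set Implicit Arguments. Unset Strict Implicit. Unset Printing Implicit Defensive.
Import Order.TTheory GRing.Theory Num.Theory.
Local Open Scope ring_scope.

Lemma foldl_par (S1 S2 T : Type) (f1 : S1 -> T -> S1) (f2 : S2 -> T -> S2)
  (Inv : seq T -> S1 -> S2 -> Prop) (s : seq T) :
  (forall l x s' a b, l ++ x :: s' = s -> Inv l a b -> Inv (rcons l x) (f1 a x) (f2 b x)) ->
  forall a b, Inv [::] a b -> Inv s (foldl f1 a s) (foldl f2 b s).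
Proof.
move=> Hstep a b H0.
suff: forall s' l a b, l ++ s' = s -> Inv l a b -> Inv s (foldl f1 a s') (foldl f2 b s').
  by move/(_ s [::] a b erefl H0).
elim=> [|x s' IH] l a' b' Hl HI /=.
  by rewrite cats0 in Hl; rewrite -Hl.
apply: (IH (rcons l x)); first by rewrite cat_rcons.
exact: (Hstep l x s').
Qed.

Section Agr.
Variables (F : finFieldType) (n : nat) (I : {set 'I_n}).

Definition ok (o : option 'I_n) : bool := if o is Some i then i \in I else true.

Definition agr (ow : seq (option 'I_n)) (s1 s2 : seq F) : Prop :=
  [/\ size s1 = size ow, size s2 = size ow &
      forall p, ok (nth None ow p) -> nth 0 s1 p = nth 0 s2 p].

Lemma agr_nil : agr [::] [::] [::].
Proof. by split => // p; rewrite !nth_nil. Qed.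

Lemma agr_cat ow1 ow2 s1 s2 t1 t2 :
  agr ow1 s1 s2 -> agr ow2 t1 t2 -> agr (ow1 ++ ow2) (s1 ++ t1) (s2 ++ t2).
Proof.
case=> a1 a2 a3 [b1 b2 b3]; split; rewrite ?size_cat ?a1 ?a2 ?b1 ?b2 // => p.
rewrite !nth_cat a1 a2; case: ifP => _; first exact: a3.
exact: b3.
Qed.

Lemma agr_cons o ow x1 x2 s1 s2 :
  (ok o -> x1 = x2) -> agr ow s1 s2 -> agr (o :: ow) (x1 :: s1) (x2 :: s2).
Proof.
move=> H [a1 a2 a3]; split => /=; rewrite ?a1 ?a2 // => -[|p] /=; first exact: H.
exact: a3.
Qed.

Lemma agr_map (T : Type) (g : T -> option 'I_n) (f1 f2 : T -> F) (s : seq T) :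
  (forall x, ok (g x) -> f1 x = f2 x) -> agr (map g s) (map f1 s) (map f2 s).
Proof.
move=> H; elim: s => [|x s IH] /=; first exact: agr_nil.
by apply: agr_cons => //; apply: H.
Qed.

Lemma agr_flatten (T : Type) (g : T -> seq (option 'I_n)) (h1 h2 : T -> seq F) (s : seq T) :
  (forall x, agr (g x) (h1 x) (h2 x)) ->
  agr (flatten (map g s)) (flatten (map h1 s)) (flatten (map h2 s)).
Proof.
move=> H; elim: s => [|x s IH] /=; first exact: agr_nil.
exact: agr_cat.
Qed.

End Agr.

Section Refresh.
Variables (F : finFieldType) (n : nat) (I : {set 'I_n}) (u : 'I_n).
Hypothesis Hu : u \notin I.

Definition rp (d : 'I_n -> F) (ij : 'I_n * 'I_n) : F :=
  if ij.2 == u then - d ij.1 else if ij.1 == u then d ij.2 else 0.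

Definition Dl (d : 'I_n -> F) (l : seq ('I_n * 'I_n)) (w : 'I_n) : F :=
  d w + \sum_(p <- l) ((if p.1 == w then rp d p else 0) - (if p.2 == w then rp d p else 0)).

Variable d : 'I_n -> F.
Hypothesis dI : forall w, w \in I -> d w = 0.

Lemma rp_I w p : w \in I -> (p.1 == w) || (p.2 == w) -> rp d p = 0.
Proof.
move=> wI; have wu : w != u by apply: contraNneq Hu => <-.
rewrite /rp; case/orP=> /eqP E; rewrite E.
  by rewrite (negbTE wu) dI ?oppr0 //; case: ifP.
by rewrite (negbTE wu); case: ifP => // _; rewrite dI.
Qed.

Lemma Dl_I l w : w \in I -> Dl d l w = 0.
Proof.
move=> wI; rewrite /Dl dI // add0r big1_seq // => p _.
case: ifP => [h1|_]; first rewrite (rp_I wI) ?h1 //.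
  by case: ifP; rewrite subrr.
case: ifP => [h2|_]; last by rewrite subrr.
by rewrite (rp_I wI) ?h2 ?orbT // subrr.
Qed.

Lemma sum_pick (P : pred 'I_n) (c : 'I_n) (X : F) :
  \sum_(j | P j) (if j == c then X else 0) = if P c then X else 0.
Proof.
case: (boolP (P c)) => Pc.
  rewrite (bigD1 c) //= eqxx big1 ?addr0 // => j /andP[_ /negbTE ->] //.
by rewrite big1 // => j Pj; case: eqP => // E; move: Pc; rewrite -E Pj.
Qed.

Lemma sum_Dl l : \sum_w d w = 0 -> \sum_w Dl d l w = 0.
Proof.
move=> Hs; rewrite /Dl big_split /= Hs add0r exchange_big /= big1_seq // => p _.
rewrite sumrB.
have E (c : 'I_n) : \sum_(w < n) (if c == w then rp d p else 0) = rp d p.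
  by rewrite (eq_bigr (fun w => if w == c then rp d p else 0)) ?sum_pick // => w _; rewrite eq_sym.
by rewrite !E subrr.
Qed.


Lemma Dl_rcons l p w : Dl d (rcons l p) w =
  Dl d l w + ((if p.1 == w then rp d p else 0) - (if p.2 == w then rp d p else 0)).
Proof. by rewrite /Dl big_rcons addrA. Qed.

Lemma sum_pickT (c : 'I_n) (X : F) :
  \sum_j (if j == c then X else 0) = X.
Proof. by rewrite (sum_pick xpredT). Qed.

Hypothesis dsum : \sum_w d w = 0.

Lemma Dl_final w : Dl d (refresh_pairs n) w = 0.
Proof.
suff Hne : forall w, w != u -> Dl d (refresh_pairs n) w = 0.
  case: (eqVneq w u) => [->|/Hne //].
  have := sum_Dl (refresh_pairs n) dsum.
  rewrite (bigD1 u) //= big1 ?addr0 // => v /Hne //.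
move=> {}w wu; rewrite /Dl big_allpairs_dep /= big_enum /=.
under eq_bigr do rewrite big_filter big_enum_cond /= sumrB.
rewrite sumrB.
have E1 : \sum_(i in 'I_n) \sum_(j < n | (i < j)%N) (if i == w then rp d (i, j) else 0)
   = if (w < u)%N then - d w else 0.
  rewrite (eq_bigr (fun i => if i == w then \sum_(j < n | (w < j)%N) rp d (w, j) else 0)); last first.
    by move=> i _; case: (eqVneq i w) => [->|_] //; rewrite big1.
  rewrite sum_pickT.
  rewrite (eq_bigr (fun j => if j == u then - d w else 0)) ?sum_pick // => j _.
  by rewrite /rp /= (negbTE wu).
have E2 : \sum_(i in 'I_n) \sum_(j < n | (i < j)%N) (if j == w then rp d (i, j) else 0)
   = if (u < w)%N then d w else 0.
  rewrite (eq_bigr (fun i : 'I_n => if (i < w)%N then rp d (i, w) else 0)); last first.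
    move=> i _; rewrite (eq_bigr (fun j => if j == w then rp d (i, w) else 0)).
      exact: (sum_pick (fun j => (i < j)%N)).
    by move=> j _; case: eqP => // ->.
  rewrite -big_mkcond /=.
  rewrite (eq_bigr (fun i => if i == u then d w else 0)) ?sum_pick // => i _.
  by rewrite /rp /= (negbTE wu).
rewrite E1 E2; case: (ltngtP w u) => h.
- by rewrite subr0 addrN.
- by rewrite add0r subrr.
- by move: wu; rewrite (_ : w = u) ?eqxx //; apply: val_inj.
Qed.

End Refresh.

Section RefreshPar.
Variables (F : finFieldType) (n : nat).

Lemma sum_upd (y : 'I_n -> F) (c : 'I_n) (v : F) : \sum_(k < n) upd y c v k = \sum_(k < n) y k - y c + v.
Proof.
rewrite (bigD1 c) //= [in RHS](bigD1 c) //= /upd eqxx.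
rewrite (eq_bigr (fun k => y k)); last by move=> k /negbTE ->.
ring.
Qed.

Lemma sr_sum (rnd : 'I_n * 'I_n -> F) (s : seq ('I_n * 'I_n)) st : \sum_(k < n) (foldl (refresh_step rnd) st s).1 k = \sum_(k < n) st.1 k.
Proof.
elim: s st => [|[i j] s IH] [y tr] //=.
rewrite IH /= !sum_upd /upd ?eqxx.
by case: ifP => _; ring.
Qed.

Lemma fa_sum (rnd : 'I_n * 'I_n -> F) (y : 'I_n -> F) : (full_add rnd y).1 = \sum_(k < n) y k.
Proof.
rewrite /full_add /strong_refresh.
case E: foldl => [a tr] /=.
by have := sr_sum rnd (refresh_pairs n) (y, [seq y i | i <- enum 'I_n]); rewrite E.
Qed.

Variables (I : {set 'I_n}) (u : 'I_n).
Hypothesis Hu : u \notin I.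
Variable d : 'I_n -> F.
Hypothesis dI : forall w, w \in I -> d w = 0.
Hypothesis dsum : \sum_w d w = 0.

Definition ows (p : 'I_n * 'I_n) : seq (option 'I_n) := [:: Some p.1; Some p.1; Some p.2].
Definition ow_y : seq (option 'I_n) := [seq Some i | i <- enum 'I_n].
Definition ow_fa : seq (option 'I_n) :=
  (ow_y ++ flatten [seq ows p | p <- refresh_pairs n]) ++ [seq None | _ <- enum 'I_n].

Lemma sr_par rnd1 rnd2 y1 y2 :
  (forall w, y2 w = y1 w + d w) -> (forall p, rnd2 p = rnd1 p + rp u d p) ->
  (forall w, (strong_refresh rnd2 y2).1 w = (strong_refresh rnd1 y1).1 w + Dl u d (refresh_pairs n) w)
  /\ agr I (ow_y ++ flatten [seq ows p | p <- refresh_pairs n])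
       (strong_refresh rnd1 y1).2 (strong_refresh rnd2 y2).2.
Proof.
move=> Hy Hr; rewrite /strong_refresh.
apply: (foldl_par (Inv := fun l a b => (forall w, b.1 w = a.1 w + Dl u d l w) /\
   agr I (ow_y ++ flatten [seq ows p | p <- l]) a.2 b.2)).
  move=> l [i j] s' [z1 tr1] [z2 tr2] _ [Hz Ha] /=; simpl in Hz, Ha.
  have key : forall w, upd (upd z2 i (z2 i + rnd2 (i, j))) j (upd z2 i (z2 i + rnd2 (i, j)) j - rnd2 (i, j)) w
     = upd (upd z1 i (z1 i + rnd1 (i, j))) j (upd z1 i (z1 i + rnd1 (i, j)) j - rnd1 (i, j)) w
       + Dl u d (rcons l (i, j)) w.
    move=> w; rewrite Dl_rcons /= /upd Hr !Hz.
    rewrite [i == w]eq_sym [j == w]eq_sym.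
    case: (eqVneq w j) => [->|wj]; case: (eqVneq j i) => [->|ji]; rewrite ?eqxx //=;
      try (case: (eqVneq w i) => [->|wi]); rewrite ?eqxx ?(negbTE ji) //=; ring.
  split => //.
  rewrite map_rcons flatten_rcons catA; apply: agr_cat => //.
  apply: agr_cons => [/= iI|]; first by rewrite Hr (rp_I Hu dI iI) ?eqxx // addr0.
  apply: agr_cons => [/= iI|]; first by rewrite key (Dl_I Hu dI) // addr0.
  apply: agr_cons => [/= jI|]; first by rewrite key (Dl_I Hu dI) // addr0.
  exact: agr_nil.
split => [w|] /=; first by rewrite Hy /Dl big_nil addr0.
rewrite cats0; apply: agr_map => i /= iI.
by rewrite Hy dI // addr0.
Qed.

Lemma fa_par rnd1 rnd2 y1 y2 :
  (forall w, y2 w = y1 w + d w) -> (forall p, rnd2 p = rnd1 p + rp u d p) ->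
  (full_add rnd1 y1).1 = (full_add rnd2 y2).1 /\
  agr I ow_fa (full_add rnd1 y1).2 (full_add rnd2 y2).2.
Proof.
move=> Hy Hr; have [H1 H2] := sr_par Hy Hr.
rewrite /full_add.
move: H1 H2; case: (strong_refresh rnd1 y1) => a1 tr1; case: (strong_refresh rnd2 y2) => a2 tr2 /=.
move=> H1 H2.
have Ha : forall w, a2 w = a1 w by move=> w; rewrite H1 (Dl_final u dsum) addr0.
split; first by apply: eq_bigr => w _; rewrite Ha.
apply: agr_cat => //; apply: agr_map => k _.
by apply: eq_bigr => w _; rewrite Ha.
Qed.

End RefreshPar.

Lemma enum_sorted m : sorted (fun a b : 'I_m => (a < b)%N) (enum 'I_m).
Proof. by have := iota_ltn_sorted 0 m; rewrite -val_enum_ord sorted_map. Qed.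

Lemma pre_rev m (l : seq 'I_m) j s' : l ++ j :: s' = rev (enum 'I_m) ->
  forall j', (j' \in l) = (j < j')%N.
Proof.
move=> H j'.
have trl : transitive (fun a b : 'I_m => (a < b)%N) by move=> y x z; apply: ltn_trans.
have trg : transitive (fun a b : 'I_m => (b < a)%N) by move=> y x z h1 h2; apply: ltn_trans h2 h1.
have S1 : sorted (fun a b : 'I_m => (b < a)%N) (l ++ j :: s') by rewrite H rev_sorted enum_sorted.
have S2 : sorted (fun a b : 'I_m => (a < b)%N) (rev s' ++ j :: rev l).
  by rewrite -rev_rcons -cats1 -rev_cat -catA /= H revK enum_sorted.
move: S1; rewrite sorted_cat_cons => /andP[_]; rewrite (path_sortedE trg) => /andP[A1 _].
move: S2; rewrite sorted_cat_cons => /andP[_]; rewrite (path_sortedE trl) => /andP[A2 _].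
apply/idP/idP => [jl|jj].
  by move/allP: A2 => /(_ j'); rewrite mem_rev => /(_ jl).
have : j' \in rev (enum 'I_m) by rewrite mem_rev mem_enum.
rewrite -H mem_cat inE => /or3P[//||] .
  by move/eqP=> E; rewrite E ltnn in jj.
move=> js; move/allP: A1 => /(_ j' js) /= h.
by have := ltn_trans h jj; rewrite ltnn.
Qed.

Section SBS.
Variables (F : finFieldType) (n m : nat).
Implicit Types (A : 'I_n -> 'M[F]_m) (b : 'I_n -> 'cV[F]_m).

Definition recs A b (o : 'I_m -> F) := forall j : 'I_m,
  o j = \sum_(i < n) b i j 0 + \sum_(j' < m | (j < j')%N) o j' * \sum_(i < n) A i j j'.

Definition Lj (j : 'I_m) : seq ('I_m * 'I_n) :=
  [seq (k, i) | k <- [seq k : 'I_m <- enum 'I_m | (k < j)%N], i <- enum 'I_n].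
Definition owu (p : 'I_m * 'I_n) : seq (option 'I_n) := [:: Some p.2; Some p.2].
Definition owit (j : 'I_m) := ow_fa n ++ flatten [seq owu p | p <- Lj j].
Definition OW0 : seq (option 'I_n) :=
  flatten [seq [seq Some i | k <- enum 'I_m, j <- enum 'I_m] | i <- enum 'I_n]
  ++ [seq Some i | i <- enum 'I_n, k <- enum 'I_m].
Definition OW := OW0 ++ flatten [seq owit j | j <- rev (enum 'I_m)].

Lemma sumLj j k i (X : F) :
  \sum_(p <- Lj j) (if p == (k, i) then X else 0) = if (k < j)%N then X else 0.
Proof.
rewrite big_allpairs_dep /= big_filter big_enum_cond /=.
rewrite (eq_bigr (fun k' => if k' == k then X else 0)) ?sum_pick // => k' _.
rewrite big_enum /=.
case: (eqVneq k' k) => [->|kk].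
  by rewrite (eq_bigr (fun i' => if i' == i then X else 0)) ?sum_pickT // => i' _; rewrite xpair_eqE eqxx.
by rewrite big1 // => i' _; rewrite xpair_eqE (negbTE kk).
Qed.

Lemma sum_rcons_cond (l : seq 'I_m) j k (G : 'I_m -> F) : j \notin l ->
  \sum_(j' < m | (j' \in rcons l j) && (k < j')%N) G j'
  = \sum_(j' < m | (j' \in l) && (k < j')%N) G j' + (if (k < j)%N then G j else 0).
Proof.
move=> jl.
under eq_bigl do rewrite mem_rcons in_cons.
case: (ltnP k j) => h.
  rewrite (bigD1 j) /= ?eqxx ?h // addrC; congr (_ + _); apply: eq_bigl => j'.
  case: (eqVneq j' j) => [->|] /=; first by rewrite (negbTE jl) andbF.
  by rewrite andbT.
rewrite addr0; apply: eq_bigl => j'.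
case: (eqVneq j' j) => [->|] //=; rewrite (negbTE jl) /=.
by apply/negbTE; rewrite -leqNgt.
Qed.

Lemma sum_cf b A (o : 'I_m -> F) j :
  \sum_(w < n) (b w j 0 + \sum_(j' < m | (j < j')%N) o j' * A w j j')
  = \sum_(w < n) b w j 0 + \sum_(j' < m | (j < j')%N) o j' * \sum_(w < n) A w j j'.
Proof.
rewrite big_split /= exchange_big; congr (_ + _); apply: eq_bigr => j' _.
by rewrite mulr_sumr.
Qed.

Lemma sbs_out_E A b r : sbs_out A b r = \col_j (sbs_run A b r).1.2 j.
Proof. by rewrite /sbs_out; case: sbs_run => [[]]. Qed.

Variables (I : {set 'I_n}) (u : 'I_n).
Hypothesis Hu : u \notin I.
Variables (A A' : 'I_n -> 'M[F]_m) (b b' : 'I_n -> 'cV[F]_m) (o : 'I_m -> F).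
Hypothesis HA : forall i, i \in I -> A' i = A i.
Hypothesis Hb : forall i, i \in I -> b' i = b i.
Hypothesis recA : recs A b o.
Hypothesis recA' : recs A' b' o.

Definition dlt (j : 'I_m) (i : 'I_n) : F :=
  (b' i j 0 + \sum_(j' < m | (j < j')%N) o j' * A' i j j')
  - (b i j 0 + \sum_(j' < m | (j < j')%N) o j' * A i j j').

Definition phi (r : sbs_rnd F n m) : sbs_rnd F n m :=
  [ffun j => [ffun p => r j p + rp u (dlt j) p]].

Definition Inv (l : seq 'I_m) (s1 s2 : sbs_state F n m) : Prop :=
  [/\ forall k i, s1.1.1 k i = b i k 0 + \sum_(j' < m | (j' \in l) && (k < j')%N) o j' * A i k j',
      forall k i, s2.1.1 k i = b' i k 0 + \sum_(j' < m | (j' \in l) && (k < j')%N) o j' * A' i k j',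
      forall j, s1.1.2 j = if j \in l then o j else 0,
      forall j, s2.1.2 j = if j \in l then o j else 0 &
      agr I (OW0 ++ flatten [seq owit j | j <- l]) s1.2 s2.2].


Lemma step_ok (r : sbs_rnd F n m) l j s' s1 s2 :
  l ++ j :: s' = rev (enum 'I_m) -> Inv l s1 s2 ->
  Inv (rcons l j) (sbs_iter A r s1 j) (sbs_iter A' (phi r) s2 j).
Proof.
move=> Hpre; case: s1 => [[bs1 x1] tr1]; case: s2 => [[bs2 x2] tr2].
case=> /= Hb1 Hb2 Hx1 Hx2 Ha.
have Hl := pre_rev Hpre.
have jl : j \notin l by rewrite Hl ltnn.
have cf1 : forall w, bs1 j w = b w j 0 + \sum_(j' < m | (j < j')%N) o j' * A w j j'.
  by move=> w; rewrite Hb1; congr (_ + _); apply: eq_bigl => j'; rewrite Hl andbb.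
have cf2 : forall w, bs2 j w = b' w j 0 + \sum_(j' < m | (j < j')%N) o j' * A' w j j'.
  by move=> w; rewrite Hb2; congr (_ + _); apply: eq_bigl => j'; rewrite Hl andbb.
have Hy : forall w, bs2 j w = bs1 j w + dlt j w.
  by move=> w; rewrite cf1 cf2 /dlt; ring.
have dI : forall w, w \in I -> dlt j w = 0.
  by move=> w wI; rewrite /dlt HA // Hb // subrr.
have dsum : \sum_w dlt j w = 0.
  by rewrite /dlt sumrB !sum_cf -recA -recA' subrr.
have Hr : forall p, phi r j p = r j p + rp u (dlt j) p by move=> p; rewrite !ffunE.
have [Ex Eag] := fa_par Hu dI dsum Hy Hr.
have Ex1 : (full_add (r j) (bs1 j)).1 = o j.
  by rewrite fa_sum (eq_bigr _ (fun w _ => cf1 w)) sum_cf -recA.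
rewrite /sbs_iter.
move: Ex Eag Ex1.
case: (full_add (r j) (bs1 j)) => xj1 trf1; case: (full_add (phi r j) (bs2 j)) => xj2 trf2 /=.
move=> <- Eag Ex1; subst xj1.
set x1' := fun j' => if j' == j then o j else x1 j'.
set x2' := fun j' => if j' == j then o j else x2 j'.
pose Inv2 (l' : seq ('I_m * 'I_n)) (s1 s2 : sbs_state F n m) :=
  [/\ s1.1.2 = x1', s2.1.2 = x2',
      forall k i, s1.1.1 k i = bs1 k i + \sum_(p <- l') (if p == (k, i) then o j * A i k j else 0),
      forall k i, s2.1.1 k i = bs2 k i + \sum_(p <- l') (if p == (k, i) then o j * A' i k j else 0) &
      agr I ((OW0 ++ flatten [seq owit j | j <- l]) ++ ow_fa n ++ flatten [seq owu p | p <- l'])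
          s1.2 s2.2].
have : Inv2 (Lj j) (foldl (sbs_upd A j) (bs1, x1', tr1 ++ trf1) (Lj j))
                    (foldl (sbs_upd A' j) (bs2, x2', tr2 ++ trf2) (Lj j)).
  apply: foldl_par.
    move=> l' [k i] s'' [[c1 y1] t1] [[c2 y2] t2] _ [/= -> -> Hc1 Hc2 Hag].
    split => //=.
    - move=> k' i'; rewrite big_rcons /= xpair_eqE [k == k']eq_sym [i == i']eq_sym.
      case: (eqVneq k' k) => [->|] /=; last by rewrite addr0 Hc1.
      case: (eqVneq i' i) => [->|] /=; last by rewrite addr0 Hc1.
      by rewrite Hc1 /x1' eqxx addrA.
    - move=> k' i'; rewrite big_rcons /= xpair_eqE [k == k']eq_sym [i == i']eq_sym.
      case: (eqVneq k' k) => [->|] /=; last by rewrite addr0 Hc2.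
      case: (eqVneq i' i) => [->|] /=; last by rewrite addr0 Hc2.
      by rewrite Hc2 /x2' eqxx addrA.
    have -> : ((OW0 ++ flatten [seq owit j | j <- l]) ++ ow_fa n ++ flatten [seq owu p | p <- rcons l' (k, i)])
       = (((OW0 ++ flatten [seq owit j | j <- l]) ++ ow_fa n ++ flatten [seq owu p | p <- l']) ++ owu (k, i)).
      by rewrite map_rcons flatten_rcons !catA.
    apply: agr_cat => //.
    have e12 : i \in I -> c1 k i = c2 k i.
      move=> iI; rewrite Hc1 Hc2 Hb1 Hb2 HA // Hb //.
    apply: agr_cons => [/= iI|]; first by rewrite /x1' /x2' !eqxx HA.
    apply: agr_cons => [/= iI|]; last exact: agr_nil.
    by rewrite /x1' /x2' !eqxx HA // e12.
  rewrite /Inv2; split => //=; try (by move=> k i; rewrite big_nil addr0).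
  by rewrite /= cats0; apply: agr_cat.
case=> Hy1 Hy2 Hc1 Hc2 Hag.
split.
- by move=> k i; rewrite Hc1 sumLj Hb1 sum_rcons_cond // addrA.
- by move=> k i; rewrite Hc2 sumLj Hb2 sum_rcons_cond // addrA.
- move=> j'; rewrite Hy1 /x1' mem_rcons in_cons Hx1.
  by case: (eqVneq j' j) => [->|].
- move=> j'; rewrite Hy2 /x2' mem_rcons in_cons Hx2.
  by case: (eqVneq j' j) => [->|].
by rewrite map_rcons flatten_rcons catA.
Qed.


Lemma run_par r :
  [/\ forall j, (sbs_run A b r).1.2 j = o j,
      forall j, (sbs_run A' b' (phi r)).1.2 j = o j &
      agr I OW (sbs_trace A b r) (sbs_trace A' b' (phi r))].
Proof.
rewrite /sbs_trace /sbs_run.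
have H := @foldl_par _ _ _ (sbs_iter A r) (sbs_iter A' (phi r)) Inv (rev (enum 'I_m))
  (fun l x s' a c Hp HI => step_ok r Hp HI).
set st1 := (X in foldl (sbs_iter A r) X _); set st2 := (X in foldl (sbs_iter A' (phi r)) X _).
case: (H st1 st2) => [|_ _ Hx1 Hx2 Ha].
  split => //=.
  - by move=> k i; rewrite big1 ?addr0 // => j'; rewrite in_nil.
  - by move=> k i; rewrite big1 ?addr0 // => j'; rewrite in_nil.
  rewrite cats0 /OW0; apply: agr_cat.
    apply: agr_flatten => i; apply: agr_flatten => k; apply: agr_map => j' /= iI.
    by rewrite HA.
  apply: agr_flatten => i; apply: agr_map => k /= iI.
  by rewrite Hb.
split.
- by move=> j'; rewrite Hx1 mem_rev mem_enum.
- by move=> j'; rewrite Hx2 mem_rev mem_enum.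
exact: Ha.
Qed.

End SBS.

Lemma rec_exists (F : finFieldType) (n m : nat) (A : 'I_n -> 'M[F]_m) (b : 'I_n -> 'cV[F]_m) :
  exists o, recs A b o.
Proof.
suff H : forall d, exists x : 'I_m -> F, forall j : 'I_m, (m - d <= j)%N ->
  x j = \sum_(i < n) b i j 0 + \sum_(j' < m | (j < j')%N) x j' * \sum_(i < n) A i j j'.
  by have [x Hx] := H m; exists x => j; apply: Hx; rewrite subnn.
elim=> [|d [x Hx]].
  by exists (fun _ => 0) => j; rewrite subn0 leqNgt ltn_ord.
exists (fun j : 'I_m => if val j == (m - d.+1)%N then
   \sum_(i < n) b i j 0 + \sum_(j' < m | (j < j')%N) x j' * \sum_(i < n) A i j j' else x j).
move=> j hj.
have E : forall j' : 'I_m, ((m - d.+1)%N <= j)%N -> (j < j')%N ->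
   (if val j' == (m - d.+1)%N then \sum_(i < n) b i j' 0 + \sum_(j'' < m | (j' < j'')%N) x j'' * \sum_(i < n) A i j' j'' else x j') = x j'.
  move=> j' h1 h2; case: eqP => // E.
  by rewrite -E leqNgt h2 in h1.
case: eqP => Ej.
  congr (_ + _); apply: eq_bigr => j' h; rewrite E //; lia.
have Ej2 : nat_of_ord j <> (m - d.+1)%N by exact: Ej.
rewrite Hx; last by lia.
congr (_ + _); apply: eq_bigr => j' h; rewrite E //; lia.
Qed.


Lemma card_bij (R : finType) (E : pred R) (f g : R -> R) :
  cancel f g -> cancel g f -> #|[set r | E (f r)]| = #|[set r | E r]|.
Proof.
move=> fg gf; rewrite -(card_imset _ (can_inj fg)); apply: eq_card => s.
rewrite inE; apply/imsetP/idP => [[r]|Hs]; first by rewrite inE => Hr ->.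
by exists (g s); rewrite ?inE gf.
Qed.

Section Final.
Variables (F : finFieldType) (n m : nat) (I : {set 'I_n}) (u : 'I_n).
Hypothesis Hu : u \notin I.

Definition Asim (A : 'I_n -> 'M[F]_m) : 'I_n -> 'M[F]_m := fun i => if i \in I then A i else 0.
Definition bsim (A : 'I_n -> 'M[F]_m) (b : 'I_n -> 'cV[F]_m) (o : 'cV[F]_m) : 'I_n -> 'cV[F]_m :=
  fun i => if i \in I then b i else if i == u then
    \col_k (o k 0 - \sum_(j' < m | (k < j')%N) o j' 0 * \sum_(i < n) Asim A i k j'
             - \sum_(i < n | i \in I) b i k 0) else 0.

Lemma recs_sim A b (o : 'cV[F]_m) : recs (Asim A) (bsim A b o) (fun j => o j 0).
Proof.
move=> j; rewrite (bigID (fun i => i \in I)) /=.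
rewrite [X in _ = X + _ + _](eq_bigr (fun i => b i j 0)); last by move=> i iI; rewrite /bsim iI.
rewrite [X in _ = _ + X + _](eq_bigr (fun i => if i == u then o j 0 - \sum_(j' < m | (j < j')%N) o j' 0 * \sum_(i < n) Asim A i j j'
             - \sum_(i < n | i \in I) b i j 0 else 0)); last first.
  move=> i iI; rewrite /bsim (negbTE iI); case: eqP => // _; by rewrite mxE.
rewrite (sum_pick (fun i => i \notin I)) Hu.
ring.
Qed.

Definition psi (A A' : 'I_n -> 'M[F]_m) (b b' : 'I_n -> 'cV[F]_m) (o : 'I_m -> F)
  (r : sbs_rnd F n m) : sbs_rnd F n m :=
  [ffun j => [ffun p => r j p - rp u (dlt A A' b b' o j) p]].

Lemma phi_cancel (A A' : 'I_n -> 'M[F]_m) (b b' : 'I_n -> 'cV[F]_m) (o : 'I_m -> F) :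
  cancel (phi u A A' b b' o) (psi A A' b b' o).
Proof. by move=> r; apply/ffunP => j; apply/ffunP => p; rewrite !ffunE addrK. Qed.

Lemma phi_cancel' (A A' : 'I_n -> 'M[F]_m) (b b' : 'I_n -> 'cV[F]_m) (o : 'I_m -> F) :
  cancel (psi A A' b b' o) (phi u A A' b b' o).
Proof. by move=> r; apply/ffunP => j; apply/ffunP => p; rewrite !ffunE subrK. Qed.

End Final.

Theorem lemma6 (F : finFieldType) (t m : nat) :
  (1 <= t)%N ->
  @t_NIo F t.+1 'M[F]_m 'cV[F]_m 'cV[F]_m (sbs_rnd F t.+1 m) t
    (@sbs_trace F t.+1 m) (@sbs_out F t.+1 m).
Proof.
move=> t1 P uP sP inP.
set s := [seq nth None (OW t.+1 m) p | p <- P].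
pose I := [set i : 'I_t.+1 | Some i \in s].
have cI : (#|I| <= size P)%N.
  have -> : #|I| = #|pmap id s| by apply: eq_card => i; rewrite inE mem_pmap map_id.
  apply: leq_trans (card_size _) _.
  by rewrite size_pmap (leq_trans (count_size _ _)) // size_map.
have [u Hu] : exists u, u \notin I.
  case: (pickP [pred u | u \notin I]) => [u Hu|H0]; first by exists u.
  exfalso.
  have EI : I = setT by apply/setP => i; rewrite in_setT (negbFE (H0 i)).
  by move: cI; rewrite EI cardsT card_ord; lia.
exists I, I; split => //.
exists (sbs_rnd F t.+1 m), (fun A b o s => probe P (sbs_trace (Asim I A) (bsim I u A b o) s)).
split.
  move=> A A2 b b2 o0 s0 HA Hb.
  have eA : Asim I A = Asim I A2.
    by apply: functional_extensionality => i; rewrite /Asim; case: ifP => // /HA ->.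
  have eb : bsim I u A b o0 = bsim I u A2 b2 o0.
    apply: functional_extensionality => i; rewrite /bsim eA; case: ifP => [/Hb //|_].
    case: eqP => // _; apply/matrixP => k l; rewrite !mxE; congr (_ - _).
    by apply: eq_bigr => i' /Hb ->.
  by rewrite eA eb.
move=> A b o0 v.
have [oA recA] := rec_exists A b.
have Hu0 : (ord0 : 'I_t.+1) \notin (set0 : {set 'I_t.+1}) by rewrite in_set0.
have Hout : forall r, sbs_out A b r = \col_j oA j.
  move=> r; have [Ho _ _] := run_par Hu0 (fun i _ => erefl (A i)) (fun i _ => erefl (b i)) recA recA r.
  by rewrite sbs_out_E; apply/matrixP => j k; rewrite !mxE Ho.
have Rpos : (0 < #|sbs_rnd F t.+1 m|)%N.
  by apply/card_gt0P; exists [ffun _ => [ffun _ => 0]].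
case: (eqVneq (\col_j oA j) o0) => Eo; last first.
  have e1 : [set r | (probe P (sbs_trace A b r) == v) && (sbs_out A b r == o0)] = set0.
    by apply/setP => r; rewrite !inE Hout (negbTE Eo) andbF.
  have e2 : [set r | sbs_out A b r == o0] = set0.
    by apply/setP => r; rewrite !inE Hout (negbTE Eo).
  by rewrite /prob e1 e2 cards0 !mul0r.
have ef : (fun j => o0 j 0) = oA.
  by apply: functional_extensionality => j; rewrite -Eo mxE.
have recS := recs_sim Hu A b o0; rewrite ef in recS.
have HA' : forall i, i \in I -> Asim I A i = A i by move=> i iI; rewrite /Asim iI.
have Hb' : forall i, i \in I -> bsim I u A b o0 i = b i by move=> i iI; rewrite /bsim iI.
have Hpr : forall r, probe P (sbs_trace A b r) =
    probe P (sbs_trace (Asim I A) (bsim I u A b o0) (phi u A (Asim I A) b (bsim I u A b o0) oA r)).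
  move=> r; have [_ _ [_ _ Hag]] := run_par Hu HA' Hb' recA recS r.
  rewrite /probe; apply/eq_in_map => p pP; apply: Hag.
  case E: nth => [i|] //=; rewrite inE; apply/mapP; exists p => //.
have e1 : [set r | (probe P (sbs_trace A b r) == v) && (sbs_out A b r == o0)]
    = [set r | (fun s => probe P (sbs_trace (Asim I A) (bsim I u A b o0) s) == v)
                 (phi u A (Asim I A) b (bsim I u A b o0) oA r)].
  by apply/setP => r; rewrite !inE Hout Eo eqxx andbT Hpr.
have e2 : [set r | sbs_out A b r == o0] = setT.
  by apply/setP => r; rewrite !inE Hout Eo eqxx.
rewrite /prob e1 e2 cardsT divff ?mul1r; last by rewrite pnatr_eq0 -lt0n.
by rewrite (@card_bij _ (fun s => probe P (sbs_trace (Asim I A) (bsim I u A b o0) s) == v) _ _ (phi_cancel _ _ _ _ _ _) (phi_cancel' _ _ _ _ _ _)).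
Qed.
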